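(* Every execution path of a cellular multipointed $d$-space $X_\lambda$ is locally injective.
   Context: Work in $\mathbf{Top}$, the category of $\Delta$-generated spaces (or $\Delta$-Hausdorff $\Delta$-generated spaces). $\mathcal{G}(1,1)$: nondecreasing homeomorphisms of $[0,1]$; $*_N$: normalized composition of paths on $[0,1]$ (first on $[0,1/2]$, second on $[1/2,1]$, double speed). A multipointed $d$-space $X=(|X|,X^0,\mathbb{P}^{\mathcal{G}}X)$: a space, a subset of states, a set of continuous execution paths $[0,1]\to|X|$ with endpoints in $X^0$, stable under precomposition by $\mathcal{G}(1,1)$ and $*_N$. Colimits: underlying spaces and states by colimits, execution paths generated by images under $*_N$ and reparametrization. ${\rm Glob}^{\mathcal{G}}(Z)$: quotient of $\{0,1\}\sqcup Z\times[0,1]$ with $(z,0)\sim0$, $(z,1)\sim1$, states $\{0,1\}$, paths $t\mapsto(z,\phi(t))$, $\phi\in\mathcal{G}(1,1)$. Cellular: $X_\lambda=\varinjlim_{\nu<\lambda}X_\nu$ for an ordinal $\lambda$ and colimit-preserving $\nu\mapsto X_\nu$ with $X_0=(X^0,X^0,\varnothing)$ a set and each $X_\nu\to X_{\nu+1}$ a pushout of some ${\rm Glob}^{\mathcal{G}}(\mathbf{S}^{n_\nu-1})\subset{\rm Glob}^{\mathcal{G}}(\mathbf{D}^{n_\nu})$. *)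

(* Defs.v *)
From HB Require Import structures.
From mathcomp Require Import all_boot all_order all_algebra.
From mathcomp Require Import all_classical all_reals topology normedtype subtype_topology.
Import numFieldNormedType.Exports.
Import Order.TTheory GRing.Theory Num.Theory.

Set Implicit Arguments.
Unset Strict Implicit.
Unset Printing Implicit Defensive.

Local Open Scope classical_set_scope.
Local Open Scope ring_scope.

Section MultipointedDSpaces.
Variable R : realType.

Definition I01set : set R := `[0, 1].
Definition I01 : topologicalType := I01set.

(** Projection of R onto [0,1] (only used on arguments already in [0,1]). *)
Definition clamp (x : R) : R := Num.min 1 (Num.max 0 x).

Lemma clamp_in (x : R) : clamp x \in I01set.
Proof.
apply/mem_set; rewrite /I01set /= in_itv /= /clamp.
apply/andP; split.
- by rewrite le_min ler01 le_max lexx.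
- by rewrite ge_min lexx.
Qed.

Definition toI (x : R) : I01 := exist _ (clamp x) (clamp_in x).

Definition i0 : I01 := toI 0.
Definition i1 : I01 := toI 1.

(** Delta-generated spaces: the topology is final w.r.t. all continuous
    maps from [0,1] (equivalently, from all topological simplices). *)
Definition DeltaGenerated (T : topologicalType) : Prop :=
  forall U : set T,
    (forall g : I01 -> T, continuous g -> open (g @^-1` U)) -> open U.

Definition G11 (phi : I01 -> I01) : Prop :=
  [/\ continuous phi,
      (exists psi : I01 -> I01,
         [/\ continuous psi, cancel phi psi & cancel psi phi]) &
      (forall x y : I01, set_val x <= set_val y ->
                         set_val (phi x) <= set_val (phi y))].

Definition concatN (T : Type) (g h : I01 -> T) : I01 -> T :=
  fun t => if set_val t <= 1 / 2 then g (toI (2 * set_val t))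
           else h (toI (2 * set_val t - 1)).

Record mds := MDS {
  mcar :> topologicalType;
  mcar_DG : DeltaGenerated mcar;
  mst : set mcar;
  mP : set (I01 -> mcar);
  mP_cont : forall g, mP g -> continuous g;
  mP_ends : forall g, mP g -> mst (g i0) /\ mst (g i1);
  mP_reparam : forall g phi, mP g -> G11 phi -> mP (g \o phi);
  mP_concat : forall g h, mP g -> mP h -> g i1 = h i0 -> mP (concatN g h)
}.

Arguments mst : clear implicits.
Arguments mP : clear implicits.

Definition is_hom (X Y : mds) (f : X -> Y) : Prop :=
  [/\ continuous f,
      (forall x, mst X x -> mst Y (f x)) &
      (forall g, mP X g -> mP Y (f \o g))].

Definition Disk (n : nat) : set 'rV[R]_n :=
  [set x | \sum_(i < n) x ord0 i ^+ 2 <= 1].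
Definition Sphere (n : nat) : set 'rV[R]_n :=
  [set x | \sum_(i < n) x ord0 i ^+ 2 = 1].
Arguments Disk : clear implicits.
Arguments Sphere : clear implicits.

(** A morphism Glob(Z) -> Y, for Z a subset of R^n, written out:
    Glob(Z) is the quotient of {0,1} + Z x [0,1] identifying (z,0) ~ 0 and
    (z,1) ~ 1; a morphism is given by the images a, b of the states 0, 1 and
    the map g on Z x [0,1] (only its values on Z x [0,1] matter), which must
    be continuous, compatible with the identifications, and send the
    execution paths t |-> (z, phi t) to execution paths. *)
Definition glob_map (n : nat) (Z : set 'rV[R]_n) (Y : mds) (a b : Y)
    (g : 'rV[R]_n * R -> Y) : Prop :=
  [/\ mst Y a, mst Y b,
      {within [set p | Z p.1 /\ I01set p.2], continuous g},
      (forall z, Z z -> g (z, 0) = a /\ g (z, 1) = b) &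
      (forall z phi, Z z -> G11 phi ->
         mP Y (fun t => g (z, set_val (phi t))))].

(** f : X -> X' is a pushout of Glob(S^{n-1}) ⊂ Glob(D^n) along some
    attaching morphism Glob(S^{n-1}) -> X, in the category of multipointed
    d-spaces (universal property). *)
Definition cell_pushout (X X' : mds) (f : X -> X') : Prop :=
  exists (n : nat) (a b : X) (g : 'rV[R]_n * R -> X)
         (a' b' : X') (g' : 'rV[R]_n * R -> X'),
  [/\ glob_map (Sphere n) a b g,
      glob_map (Disk n) a' b' g',
      a' = f a /\ b' = f b,
      (forall z t, Sphere n z -> I01set t -> g' (z, t) = f (g (z, t))) &
      forall (Y : mds) (h : X -> Y) (c d : Y) (k : 'rV[R]_n * R -> Y),
        is_hom h -> glob_map (Disk n) c d k -> c = h a -> d = h b ->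
        (forall z t, Sphere n z -> I01set t -> k (z, t) = h (g (z, t))) ->
        let P (u : X' -> Y) :=
          [/\ is_hom u, (forall x, u (f x) = h x), u a' = c, u b' = d &
              (forall z t, Disk n z -> I01set t -> u (g' (z, t)) = k (z, t))]
        in exists u, P u /\ forall v, P v -> v = u].

(** Ordinal indexing: O is a well-ordered type (the ordinals <= lambda),
    with greatest element lam. *)
Section Ordinals.
Variables (O : Type) (lt : O -> O -> Prop).
Definition ole (m n : O) : Prop := m = n \/ lt m n.
Definition well_order : Prop :=
  [/\ well_founded lt,
      (forall m n r, lt m n -> lt n r -> lt m r) &
      (forall m n, [\/ lt m n, m = n | lt n m])].
Definition is_zero (n : O) : Prop := forall m, ~ lt m n.
Definition is_succ (m n : O) : Prop :=
  lt m n /\ forall r, ~ (lt m r /\ lt r n).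
Definition is_limit (n : O) : Prop :=
  ~ is_zero n /\ ~ (exists m, is_succ m n).
End Ordinals.

(** Cellular multipointed d-space: a colimit-preserving functor
    nu |-> X_nu (nu <= lam), with X_0 a discrete set (all points states, no
    execution paths), each X_nu -> X_{nu+1} a cell pushout, and X_nu the
    colimit of the X_mu, mu < nu, at limit ordinals. *)
Definition cellular (O : Type) (lt : O -> O -> Prop) (lam : O)
    (X : O -> mds) (F : forall m n, X m -> X n) : Prop :=
  [/\ well_order lt /\ (forall n, ole lt n lam),
      [/\ (forall n (x : X n), F n n x = x),
          (forall m n r, ole lt m n -> ole lt n r ->
             forall x, F n r (F m n x) = F m r x) &
          (forall m n, ole lt m n -> is_hom (F m n))],
      (forall n, is_zero lt n ->
         [/\ forall U : set (X n), open U, mst (X n) = setT & mP (X n) = set0]),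
      (forall m n, is_succ lt m n -> cell_pushout (F m n)) &
      (forall n, is_limit lt n ->
         forall (Y : mds) (h : forall m, X m -> Y),
           (forall m, lt m n -> is_hom (h m)) ->
           (forall m r, ole lt m r -> lt r n ->
              forall x, h r (F m r x) = h m x) ->
           let P (u : X n -> Y) :=
             is_hom u /\ (forall m, lt m n -> forall x, u (F m n x) = h m x)
           in exists u, P u /\ forall v, P v -> v = u)].

Definition locally_injective (T : Type) (g : I01 -> T) : Prop :=
  forall t : I01, exists2 U : set I01, nbhs t U &
    forall x y, U x -> U y -> g x = g y -> x = y.

End MultipointedDSpaces.

Arguments cellular {R O} lt lam X F.
Arguments mP {R} m _.
Arguments mst {R} m _.

(* Main.v *)
Require Import Defs.
From HB Require Import structures.
From mathcomp Require Import all_boot all_order all_algebra.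
From mathcomp Require Import all_classical all_reals topology normedtype subtype_topology.
From mathcomp Require Import lra.
Import numFieldNormedType.Exports.
Import Order.TTheory GRing.Theory Num.Theory.
Local Open Scope classical_set_scope.
Local Open Scope ring_scope.
Set Implicit Arguments.
Unset Strict Implicit.
Unset Printing Implicit Defensive.
Section P1.
Variable R : realType.

Local Notation v := (@set_val (Real.sort R) (@I01set R)).
Local Notation I := (I01 R).

Lemma vP (t : I) : 0 <= v t <= 1.
Proof. by have := set_valP t; rewrite /I01set /= in_itv. Qed.

Lemma vinj (s t : I) : v s = v t -> s = t.
Proof. exact: val_inj. Qed.

Lemma vtoI (x : R) : 0 <= x <= 1 -> v (toI x) = x.
Proof.
move=> /andP[h0 h1]; change (clamp x = x).
by rewrite /clamp max_r // min_r.
Qed.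

Lemma v_i0 : v (i0 R) = 0. Proof. by rewrite vtoI // lexx ler01. Qed.
Lemma v_i1 : v (i1 R) = 1. Proof. by rewrite vtoI // lexx ler01. Qed.

Lemma ballE (t s : I) e : ball t e s <-> `|v t - v s| < e.
Proof. by []. Qed.

Definition locinjB (T : Type) (p : I -> T) :=
  forall t : I, exists2 e : R, 0 < e & forall x y : I,
    `|v x - v t| < e -> `|v y - v t| < e -> p x = p y -> x = y.

Lemma locinjB_li (T : Type) (p : I -> T) : locinjB p -> locally_injective p.
Proof.
move=> h t; have [e e0 he] := h t.
exists (ball t e); first exact: nbhsx_ballx.
move=> x y; rewrite !ballE => hx hy; apply: he; by rewrite distrC.
Qed.

Lemma cont_eps (f : I -> I) (t : I) : continuous f ->
  forall e, 0 < e -> exists2 d, 0 < d & forall s : I,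
    `|v s - v t| < d -> `|v (f s) - v (f t)| < e.
Proof.
move=> cf e e0.
have : nbhs t (f @^-1` ball (f t) e) by apply: cf; exact: nbhsx_ballx.
move/nbhs_ballP => [d d0 hd]; exists d => // s hs.
have h1 : ball t d s by apply/ballE; rewrite distrC.
by have /ballE := hd s h1; rewrite distrC.
Qed.

Section G11.
Variable phi : I -> I.
Hypothesis hphi : G11 phi.

Lemma G11_inj : injective phi.
Proof. by case: hphi => _ [psi [_ c1 _]] _; exact: can_inj c1. Qed.

Lemma G11_mono (x y : I) : v x < v y -> v (phi x) < v (phi y).
Proof.
case: hphi => _ _ hm hxy; rewrite lt_neqAle hm ?ltW // andbT.
apply/negP => /eqP/vinj/G11_inj ex; by rewrite ex ltxx in hxy.
Qed.

Lemma G11_le (x y : I) : v x <= v y -> v (phi x) <= v (phi y).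
Proof. by case: hphi => _ _ hm; exact: hm. Qed.

Lemma G11_0 : v (phi (i0 R)) = 0.
Proof.
case: hphi => _ [psi [_ c1 c2]] _.
apply/le_anti; rewrite (andP (vP _)).1 andbT.
rewrite -[X in _ <= X]v_i0 -{2}(c2 (i0 R)); apply: G11_le.
by rewrite v_i0 (andP (vP _)).1.
Qed.

Lemma G11_1 : v (phi (i1 R)) = 1.
Proof.
case: hphi => _ [psi [_ c1 c2]] _.
apply/le_anti; rewrite (andP (vP _)).2 /=.
rewrite -[X in X <= _]v_i1 -{1}(c2 (i1 R)); apply: G11_le.
by rewrite v_i1 (andP (vP _)).2.
Qed.

Lemma G11_cont : continuous phi.
Proof. by case: hphi. Qed.
End G11.
End P1.

Section P2.
Variable R : realType.
Local Notation v := (@set_val (Real.sort R) (@I01set R)).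
Local Notation I := (I01 R).

Definition Qp (T : Type) (B L E : set T) (p : I -> T) :=
  [/\ B (p (i0 R)) /\ B (p (i1 R)), locinjB p,
    (forall t, 0 < v t -> B (p t) -> exists2 d, 0 < d &
        forall s, v t - d < v s -> v s < v t -> L (p s)) &
    (forall t, v t < 1 -> B (p t) -> exists2 d, 0 < d &
        forall s, v t < v s -> v s < v t + d -> E (p s))].

Lemma phi_i0 phi : G11 phi -> phi (i0 R) = i0 R.
Proof. by move=> h; apply: vinj; rewrite G11_0 // v_i0. Qed.
Lemma phi_i1 phi : G11 phi -> phi (i1 R) = i1 R.
Proof. by move=> h; apply: vinj; rewrite G11_1 // v_i1. Qed.

Lemma Qp_reparam (T : Type) (B L E : set T) p phi :
  Qp B L E p -> G11 phi -> Qp B L E (p \o phi).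
Proof.
move=> [[hb0 hb1] hli hL hE] hphi; split.
- by rewrite /= phi_i0 // phi_i1.
- move=> t; have [e e0 he] := hli (phi t).
  have [d d0 hd] := @cont_eps R phi t (G11_cont hphi) e e0.
  exists d => // x y hx hy /= hxy.
  by apply: (G11_inj hphi); apply: he => //; apply: hd.
- move=> t t0 /= hB.
  have pt0 : 0 < v (phi t).
    by rewrite -(G11_0 hphi); apply: G11_mono => //; rewrite v_i0.
  have [d0 d00 hd0] := hL _ pt0 hB.
  have [d dd hd] := @cont_eps R phi t (G11_cont hphi) d0 d00.
  exists d => // s h1 h2 /=; apply: hd0.
    have : `|v (phi s) - v (phi t)| < d0 by apply: hd; rewrite ltr_norml; apply/andP; split; lra.
    by rewrite ltr_norml => /andP[? ?]; lra.
  exact: G11_mono.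
- move=> t t0 /= hB.
  have pt0 : v (phi t) < 1.
    by rewrite -(G11_1 hphi); apply: G11_mono => //; rewrite v_i1.
  have [d0 d00 hd0] := hE _ pt0 hB.
  have [d dd hd] := @cont_eps R phi t (G11_cont hphi) d0 d00.
  exists d => // s h1 h2 /=; apply: hd0; last first.
    have : `|v (phi s) - v (phi t)| < d0 by apply: hd; rewrite ltr_norml; apply/andP; split; lra.
    by rewrite ltr_norml => /andP[? ?]; lra.
  exact: G11_mono.
Qed.

Lemma half_le (x : I) : v x <= 1/2 -> v (toI (2 * v x)) = 2 * v x.
Proof. move=> h; have := vP x => /andP[? ?]; rewrite vtoI //; apply/andP; split; lra. Qed.
Lemma half_gt (x : I) : 1/2 < v x -> v (toI (2 * v x - 1)) = 2 * v x - 1.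
Proof. move=> h; have := vP x => /andP[? ?]; rewrite vtoI //; apply/andP; split; lra. Qed.

Lemma cat_le (T : Type) (p q : I -> T) (x : I) : v x <= 1/2 -> concatN p q x = p (toI (2 * v x)).
Proof. by move=> h; rewrite /concatN h. Qed.
Lemma cat_gt (T : Type) (p q : I -> T) (x : I) : 1/2 < v x -> concatN p q x = q (toI (2 * v x - 1)).
Proof. by move=> h; rewrite /concatN leNgt h. Qed.

Lemma normlt (a b : R) : (`|a| < b) = (- b < a < b).
Proof. by rewrite ltr_norml. Qed.
Lemma minl (a b : R) : Num.min a b <= a. Proof. by rewrite ge_min lexx. Qed.
Lemma minr (a b : R) : Num.min a b <= b. Proof. by rewrite ge_min lexx orbT. Qed.

Lemma Qp_concat (T : Type) (B L E : set T) p q :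
  (forall y, L y -> E y -> False) ->
  Qp B L E p -> Qp B L E q -> p (i1 R) = q (i0 R) -> Qp B L E (concatN p q).
Proof.
move=> dis [[pb0 pb1] pli pL pE] [[qb0 qb1] qli qL qE] pq.
have c0 : concatN p q (i0 R) = p (i0 R).
  rewrite cat_le; last by rewrite v_i0; lra.
  by congr p; apply: vinj; rewrite half_le v_i0 //; lra.
have c1 : concatN p q (i1 R) = q (i1 R).
  rewrite cat_gt; last by rewrite v_i1; lra.
  by congr q; apply: vinj; rewrite half_gt v_i1 //; lra.
split.
- by rewrite c0 c1.
- move=> t; have := vP t => /andP[t0 t1].
  case: (ltgtP (v t) (1/2)) => ht.
  + have [e e0 he] := pli (toI (2 * v t)).
    exists (Num.min (e/2) (1/2 - v t)); first by rewrite lt_min; apply/andP; split; lra.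
    have := minl (e/2) (1/2 - v t); have := minr (e/2) (1/2 - v t) => m1 m2.
    move=> x y; rewrite !normlt => /andP[x1 x2] /andP[y1 y2].
    have ex : v (toI (2 * v x)) = 2 * v x by apply: half_le; lra.
    have ey : v (toI (2 * v y)) = 2 * v y by apply: half_le; lra.
    have et : v (toI (2 * v t)) = 2 * v t by apply: half_le; lra.
    rewrite !cat_le; [|lra|lra] => /he; rewrite !normlt ex ey et => h; apply: vinj.
    have /(congr1 v) := h (ltac:(apply/andP; split; lra)) (ltac:(apply/andP; split; lra)).
    rewrite ex ey; lra.
  + have [e e0 he] := qli (toI (2 * v t - 1)).
    exists (Num.min (e/2) (v t - 1/2)); first by rewrite lt_min; apply/andP; split; lra.
    have := minl (e/2) (v t - 1/2); have := minr (e/2) (v t - 1/2) => m1 m2.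
    move=> x y; rewrite !normlt => /andP[x1 x2] /andP[y1 y2].
    have ex : v (toI (2 * v x - 1)) = 2 * v x - 1 by apply: half_gt; lra.
    have ey : v (toI (2 * v y - 1)) = 2 * v y - 1 by apply: half_gt; lra.
    have et : v (toI (2 * v t - 1)) = 2 * v t - 1 by apply: half_gt; lra.
    rewrite !cat_gt; [|lra|lra] => /he; rewrite !normlt ex ey et => h; apply: vinj.
    have /(congr1 v) := h (ltac:(apply/andP; split; lra)) (ltac:(apply/andP; split; lra)).
    rewrite ex ey; lra.
  + have [d1 d10 hd1] := pL (i1 R) (ltac:(rewrite v_i1; lra)) pb1.
    have [d2 d20 hd2] := qE (i0 R) (ltac:(rewrite v_i0; lra)) qb0.
    have [e1 e10 he1] := pli (i1 R).
    have [e2 e20 he2] := qli (i0 R).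
    pose d := Num.min (Num.min d1 d2) (Num.min e1 e2) / 2.
    have hd : [/\ 0 < d, 2 * d <= d1, 2 * d <= d2, 2 * d <= e1 & 2 * d <= e2].
      have : 0 < Num.min (Num.min d1 d2) (Num.min e1 e2) by rewrite !lt_min d10 d20 e10 e20.
      have := minl (Num.min d1 d2) (Num.min e1 e2).
      have := minr (Num.min d1 d2) (Num.min e1 e2).
      have := minl d1 d2; have := minr d1 d2; have := minl e1 e2; have := minr e1 e2.
      rewrite /d => ? ? ? ? ? ? ?; split; lra.
    case: hd => dpos dd1 dd2 de1 de2.
    have mixed : forall x y : I, `|v x - v t| < d -> `|v y - v t| < d ->
        v x <= 1/2 -> 1/2 < v y -> concatN p q x = concatN p q y -> False.
      move=> x y; rewrite !normlt ht => /andP[x1 x2] /andP[y1 y2] hx hy.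
      rewrite cat_le // cat_gt //.
      have hEy : E (q (toI (2 * v y - 1))) by apply: hd2; rewrite half_gt ?v_i0 //; lra.
      case: (ltgtP (v x) (1/2)) => hx'; last 1 first.
      * have -> : toI (2 * v x) = i1 R by apply: vinj; rewrite half_le // v_i1 hx'; lra.
        rewrite pq => /he2 h.
        have : i0 R = toI (2 * v y - 1).
          apply: h; first by rewrite subrr normr0.
          by rewrite normlt half_gt // v_i0; apply/andP; split; lra.
        by move/(congr1 v); rewrite half_gt // v_i0; lra.
      * move=> e; apply: (dis (q (toI (2 * v y - 1)))) => //; rewrite -e.
        by apply: hd1; rewrite half_le ?v_i1 //; lra.
      * by move=> _; move: (lt_le_trans hx' hx); rewrite ltxx.
    exists d => // x y hx hy hxy.
    have := vP x => /andP[? ?]; have := vP y => /andP[? ?].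
    move: (hx) (hy); rewrite !normlt ht => /andP[x1 x2] /andP[y1 y2].
    case: (lerP (v x) (1/2)) => hx'; case: (lerP (v y) (1/2)) => hy'.
    * move: hxy; rewrite !cat_le // => /he1 h; apply: vinj.
      have /(congr1 v) := h (ltac:(rewrite normlt half_le // v_i1; apply/andP; split; lra))
                         (ltac:(rewrite normlt half_le // v_i1; apply/andP; split; lra)).
      rewrite !half_le //; lra.
    * by exfalso; apply: (mixed x y).
    * by exfalso; apply: (mixed y x).
    * move: hxy; rewrite !cat_gt // => /he2 h; apply: vinj.
      have /(congr1 v) := h (ltac:(rewrite normlt half_gt // v_i0; apply/andP; split; lra))
                         (ltac:(rewrite normlt half_gt // v_i0; apply/andP; split; lra)).
      rewrite !half_gt //; lra.
- move=> t t0; have := vP t => /andP[_ t1].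
  case: (lerP (v t) (1/2)) => ht.
  + have et : v (toI (2 * v t)) = 2 * v t by apply: half_le.
    rewrite cat_le // => hB.
    have [d0 d00 hd0] := pL (toI (2 * v t)) (ltac:(rewrite et; lra)) hB.
    exists (d0 / 2); first lra.
    move=> s s1 s2; rewrite cat_le; last lra.
    have es : v (toI (2 * v s)) = 2 * v s by apply: half_le; lra.
    rewrite et in hd0; apply: hd0; rewrite es; lra.
  + have et : v (toI (2 * v t - 1)) = 2 * v t - 1 by apply: half_gt.
    rewrite cat_gt // => hB.
    have [d0 d00 hd0] := qL (toI (2 * v t - 1)) (ltac:(rewrite et; lra)) hB.
    exists (Num.min (d0 / 2) (v t - 1/2)); first by rewrite lt_min; apply/andP; split; lra.
    have := minl (d0/2) (v t - 1/2); have := minr (d0/2) (v t - 1/2) => m1 m2.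
    move=> s s1 s2.
    have hs : 1/2 < v s by lra.
    have es : v (toI (2 * v s - 1)) = 2 * v s - 1 by apply: half_gt.
    rewrite cat_gt //.
    rewrite et in hd0; apply: hd0; rewrite es; lra.
- move=> t t1; have := vP t => /andP[t0 _].
  case: (ltgtP (v t) (1/2)) => ht.
  + have et : v (toI (2 * v t)) = 2 * v t by apply: half_le; lra.
    rewrite cat_le; last lra; move=> hB.
    have [d0 d00 hd0] := pE (toI (2 * v t)) (ltac:(rewrite et; lra)) hB.
    exists (Num.min (d0 / 2) (1/2 - v t)); first by rewrite lt_min; apply/andP; split; lra.
    have := minl (d0/2) (1/2 - v t); have := minr (d0/2) (1/2 - v t) => m1 m2.
    move=> s s1 s2.
    have hs : v s < 1/2 by lra.
    have es : v (toI (2 * v s)) = 2 * v s by apply: half_le; lra.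
    rewrite cat_le; last lra.
    rewrite et in hd0; apply: hd0; rewrite es; lra.
  + have et : v (toI (2 * v t - 1)) = 2 * v t - 1 by apply: half_gt.
    rewrite cat_gt // => hB.
    have [d0 d00 hd0] := qE (toI (2 * v t - 1)) (ltac:(rewrite et; lra)) hB.
    exists (d0 / 2); first lra.
    move=> s s1 s2; rewrite cat_gt; last lra.
    have es : v (toI (2 * v s - 1)) = 2 * v s - 1 by apply: half_gt; lra.
    rewrite et in hd0; apply: hd0; rewrite es; lra.
  + rewrite cat_le; last lra.
    have -> : toI (2 * v t) = i1 R by apply: vinj; rewrite half_le ?v_i1 ?ht; lra.
    rewrite pq => hB.
    have [d0 d00 hd0] := qE (i0 R) (ltac:(rewrite v_i0; lra)) hB.
    exists (d0 / 2); first lra.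
    move=> s s1 s2; rewrite cat_gt; last lra.
    have es : v (toI (2 * v s - 1)) = 2 * v s - 1 by apply: half_gt; lra.
    apply: hd0; rewrite es v_i0; lra.
Qed.

Lemma Qp_transport (T1 T2 : Type) (B1 L1 E1 : set T1) (B2 L2 E2 : set T2) (f : T1 -> T2) p :
  injective f -> (forall y, B1 y -> B2 (f y)) -> (forall y, B2 (f y) -> B1 y) ->
  (forall y, L1 y -> L2 (f y)) -> (forall y, E1 y -> E2 (f y)) ->
  Qp B1 L1 E1 p -> Qp B2 L2 E2 (f \o p).
Proof.
move=> fi hB hB' hL hE [[b0 b1] li pL pE]; split.
- by split; apply: hB.
- move=> t; have [e e0 he] := li t; exists e => // x y hx hy /fi; exact: he.
- move=> t t0 /hB' /(pL _ t0) [d d0 hd]; exists d => // s s1 s2; apply: hL; exact: hd.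
- move=> t t0 /hB' /(pE _ t0) [d d0 hd]; exists d => // s s1 s2; apply: hE; exact: hd.
Qed.
End P2.

Definition indR (R : realType) : Type := Real.sort R.
HB.instance Definition _ (R : realType) := Choice.on (indR R).

Section Ind.
Variable R : realType.
Local Notation v := (@set_val (Real.sort R) (@I01set R)).
Local Notation I := (I01 R).

Definition ind_op : set_system (indR R) := fun A => A = set0 \/ A = setT.
Lemma ind_opT : ind_op setT. Proof. by right. Qed.
Lemma ind_opI : setI_closed ind_op.
Proof.
move=> A B [->|->] [->|->]; rewrite ?set0I ?setI0 ?setIT; by [left|right].
Qed.
Lemma ind_op_bigU (J : Type) (f : J -> set (indR R)) :
  (forall i, ind_op (f i)) -> ind_op (\bigcup_i f i).
Proof.
move=> h; have [[i fi]|none] := pselect (exists i, f i = setT).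
  by right; apply/seteqP; split => // x _; exists i => //; rewrite fi.
left; apply/seteqP; split => // x [i _ fx].
case: (h i) => e; first by rewrite e in fx.
by exfalso; apply: none; exists i.
Qed.
End Ind.

HB.instance Definition _ (R : realType) :=
  isOpenTopological.Build (indR R) (@ind_opT R) (@ind_opI R) (@ind_op_bigU R).

Section Ind2.
Variable R : realType.
Local Notation v := (@set_val (Real.sort R) (@I01set R)).
Local Notation I := (I01 R).

Lemma ind_cont (T : topologicalType) (f : T -> indR R) : continuous f.
Proof.
move=> x A [B [hB Bfx BA]].
case: hB => eB; first by rewrite eB in Bfx.
have -> : A = setT by apply/seteqP; split => // y _; apply: BA; rewrite eB.
by apply: filterT.
Qed.

Lemma ind_DG : DeltaGenerated R (indR R).
Proof.
move=> U hU.
case: (pselect (U = set0)) => [->|/eqP/set0P [y Uy]]; first exact: open0.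
case: (pselect (U = setT)) => [->|/eqP/setTPn [y' ny']]; first exact: openT.
exfalso.
pose g (t : I) : indR R := if v t <= 1/2 then y else y'.
have := hU g (ind_cont (f:=g)); rewrite openE => /(_ (toI (1/2))).
have e12 : v (toI (1/2)) = 1/2 by rewrite vtoI //; apply/andP; split; lra.
have : (g @^-1` U) (toI (1/2)) by rewrite /= /g e12 lexx.
move=> h1 /(_ h1) /nbhs_ballP [e /= e0 he].
pose s := toI (1/2 + Num.min (e/2) (1/4)).
have := minl (e/2) (1/4); have := minr (e/2) (1/4) => m1 m2.
have m0 : 0 < Num.min (e/2) (1/4) by rewrite lt_min; apply/andP; split; lra.
have es : v s = 1/2 + Num.min (e/2) (1/4) by rewrite vtoI //; apply/andP; split; lra.
have hb : `|v (toI (1/2)) - v s| < e by rewrite e12 es normlt; apply/andP; split; lra.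
have := he s hb; rewrite /= /g es.
have -> : (1/2 + Num.min (e/2) (1/4) <= 1/2) = false by apply/negbTE; rewrite -ltNge; lra.
by [].
Qed.

Definition Ind : mds R :=
  @MDS R (indR R) ind_DG setT setT (fun s _ => ind_cont (f:=s))
    (fun _ _ => conj Logic.I Logic.I) (fun _ _ _ _ => Logic.I) (fun _ _ _ _ _ => Logic.I).

Lemma ind_hom (X : mds R) (h : X -> Ind) : is_hom h.
Proof. by split => //; exact: (ind_cont (f:=h)). Qed.

End Ind2.

Section Push.
Variable R : realType.
Local Notation v := (@set_val (Real.sort R) (@I01set R)).
Local Notation I := (I01 R).

Definition UPo (X X' : mds R) (f : X -> X') (n : nat) (a b : X)
    (g : 'rV[R]_n * R -> X) (a' b' : X') (g' : 'rV[R]_n * R -> X') : Prop :=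
      forall (Y : mds R) (h : X -> Y) (c d : Y) (k : 'rV[R]_n * R -> Y),
        is_hom h -> glob_map (@Disk R n) c d k -> c = h a -> d = h b ->
        (forall z t, @Sphere R n z -> I01set t -> k (z, t) = h (g (z, t))) ->
        let P (u : X' -> Y) :=
          [/\ is_hom u, (forall x, u (f x) = h x), u a' = c, u b' = d &
              (forall z t, @Disk R n z -> I01set t -> u (g' (z, t)) = k (z, t))]
        in exists u, P u /\ forall v, P v -> v = u.

Definition cpb (X X' : mds R) (f : X -> X') (n : nat) (a b : X)
    (g : 'rV[R]_n * R -> X) (a' b' : X') (g' : 'rV[R]_n * R -> X') : Prop :=
  [/\ glob_map (@Sphere R n) a b g,
      glob_map (@Disk R n) a' b' g',
      a' = f a /\ b' = f b,
      (forall z t, @Sphere R n z -> I01set t -> g' (z, t) = f (g (z, t))) &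
      UPo f a b g a' b' g'].

Lemma cell_pushoutE (X X' : mds R) (f : X -> X') :
  cell_pushout f -> exists n a b g a' b' g', @cpb X X' f n a b g a' b' g'.
Proof. by []. Qed.

Lemma I01set_open (t : R) : 0 < t < 1 -> I01set t.
Proof. by move=> /andP[? ?]; rewrite /I01set /= in_itv /=; apply/andP; split; apply: ltW. Qed.

Lemma ind_glob (n : nat) (Z : set 'rV[R]_n) (c d : Ind R) (k : 'rV[R]_n * R -> Ind R) :
  (forall z, Z z -> k (z, 0) = c /\ k (z, 1) = d) -> glob_map Z c d k.
Proof.
move=> h; split => //.
exact: (ind_cont (f := (k : subspace _ -> indR R))).
Qed.

Section PushFacts.
Variables (X X' : mds R) (f : X -> X') (n : nat) (a b : X)
    (g : 'rV[R]_n * R -> X) (a' b' : X') (g' : 'rV[R]_n * R -> X').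
Hypothesis H : cpb f a b g a' b' g'.

Definition interior_pt (z : 'rV[R]_n) (t : R) := @Disk R n z /\ ~ @Sphere R n z /\ 0 < t < 1.

Lemma push_time : exists u : X' -> R,
  (forall x, u (f x) = 2) /\ (forall z t, interior_pt z t -> u (g' (z, t)) = t).
Proof.
case: H => hg hg' [ea eb] hc UP.
pose h (x : X) : Ind R := 2 : R.
pose k (p : 'rV[R]_n * R) : Ind R :=
  if pselect (interior_pt p.1 p.2) then p.2 : R else 2 : R.
have hk : glob_map (@Disk R n) (h a) (h b) k.
  apply: ind_glob => z _; rewrite /k /=; split.
  - case: (pselect (interior_pt z 0)) => [hi|//]; exfalso; case: hi => _ [_ /andP[h0 _]].
    by rewrite ltxx in h0.
  - case: (pselect (interior_pt z 1)) => [hi|//]; exfalso; case: hi => _ [_ /andP[_ h1]].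
    by rewrite ltxx in h1.
have := UP (Ind R) h (h a) (h b) k (ind_hom h) hk erefl erefl.
case.
  move=> z t sz _; rewrite /k /=; case: (pselect (interior_pt z t)) => [hi|//].
  by exfalso; case: hi => _ [].
move=> u [[_ hf _ _ hk'] _]; exists u; split => // z t ht.
have hI : I01set t by apply: I01set_open; case: ht => _ [].
rewrite hk' //; last by case: ht.
by rewrite /k /=; case: (pselect (interior_pt z t)).
Qed.

Lemma push_P2 z t w : interior_pt z t -> g' (z, t) <> f w.
Proof.
move=> ht e; have [u [hf ht']] := push_time.
have := ht' _ _ ht; rewrite e hf => e2.
case: ht => _ [_ /andP[_]]; rewrite -e2.
have : (1 : R) < 2 by lra.
by move=> h1 h2; move: (lt_trans h1 h2); rewrite ltxx.
Qed.

Lemma push_P3 z1 t1 z2 t2 : interior_pt z1 t1 -> interior_pt z2 t2 ->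
  g' (z1, t1) = g' (z2, t2) -> t1 = t2.
Proof.
move=> h1 h2 e; have [u [hf ht']] := push_time.
by rewrite -(ht' _ _ h1) -(ht' _ _ h2) e.
Qed.

Lemma push_inj : injective f.
Proof.
case: H => hg hg' [ea eb] hc UP.
move=> x1 x2 e.
pose h (x : X) : Ind R := if pselect (x = x1) then 1 : R else 0 : R.
pose k (p : 'rV[R]_n * R) : Ind R :=
  if pselect (p.2 = 0) then h a else if pselect (p.2 = 1) then h b
  else if pselect (@Sphere R n p.1) then h (g p) else 0 : R.
have hk : glob_map (@Disk R n) (h a) (h b) k.
  apply: ind_glob => z _; rewrite /k /=; split.
  - by case: pselect.
  - case: pselect => [e10|n10] /=; last by case: pselect.
    by exfalso; move/eqP: e10; rewrite oner_eq0.
have := UP (Ind R) h (h a) (h b) k (ind_hom h) hk erefl erefl.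
case.
  move=> z t sz _; rewrite /k /=.
  case: hg => _ _ _ hgab _; have [ga gb] := hgab z sz.
  case: pselect => [t0|n0] /=; first by rewrite t0 ga.
  case: pselect => [t1|n1] /=; first by rewrite t1 gb.
  by case: pselect.
move=> u [[_ hf _ _ _] _].
have := hf x2; rewrite -e hf /h.
case: pselect => [_|n1] /=; case: pselect => [e2|ne] //=.
move=> h10; exfalso; have : (1 : R) = 0 := h10.
by move/eqP; rewrite oner_eq0.
Qed.

End PushFacts.
End Push.

Unset Implicit Arguments.
Ltac clra R := repeat match goal with H : @eq ?A _ _ |- _ =>
  tryif (assert_succeeds (let _ := constr:(fun x : A => (x : Real.sort R)) in idtac))
  then fail else clear H end; lra.

Section Main.
Variables (R : realType) (O : Type) (lt : O -> O -> Prop) (lam : O)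
  (X : O -> mds R) (F : forall m n, X m -> X n).
Local Notation v := (@set_val (Real.sort R) (@I01set R)).
Local Notation I := (I01 R).

Hypothesis Hwf : well_founded lt.
Hypothesis Htr : forall m n r, lt m n -> lt n r -> lt m r.
Hypothesis Htot : forall m n, [\/ lt m n, m = n | lt n m].
Hypothesis Hid : forall n (x : X n), F n n x = x.
Hypothesis Hcomp : forall m n r, ole lt m n -> ole lt n r ->
             forall x, F n r (F m n x) = F m r x.
Hypothesis Hhom : forall m n, ole lt m n -> is_hom (F m n).
Hypothesis Hzero : forall n, is_zero lt n ->
         [/\ forall U : set (X n), open U, mst (X n) = setT & mP (X n) = set0].
Hypothesis Hsucc : forall m n, is_succ lt m n -> cell_pushout (F m n).
Hypothesis Hlim : forall n, is_limit lt n ->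
         forall (Y : mds R) (h : forall m, X m -> Y),
           (forall m, lt m n -> is_hom (h m)) ->
           (forall m r, ole lt m r -> lt r n ->
              forall x, h r (F m r x) = h m x) ->
           let P (u : X n -> Y) :=
             is_hom u /\ (forall m, lt m n -> forall x, u (F m n x) = h m x)
           in exists u, P u /\ forall v, P v -> v = u.

Lemma lt_irr n : ~ lt n n.
Proof. elim: (Hwf n) => k _ IH hk. exact: (IH k hk hk). Qed.
Lemma ole_refl n : ole lt n n. Proof. by left. Qed.
Lemma ole_trans {m n r} : ole lt m n -> ole lt n r -> ole lt m r.
Proof.
case=> [->//|h1]; case=> [<-|h2]; first by right.
by right; exact: Htr h1 h2.
Qed.
Lemma lt_ole {m n} : lt m n -> ole lt m n. Proof. by right. Qed.
Lemma succ_lt {m n} : is_succ lt m n -> lt m n. Proof. by case. Qed.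
Lemma succ_below {m n r} : is_succ lt m n -> lt r n -> ole lt r m.
Proof.
move=> [hmn hs] hrn; case: (Htot r m) => [l|->|l]; [by right|by left|].
by exfalso; apply: (hs r).
Qed.
Lemma succ_uniq {m1 m2 n} : is_succ lt m1 n -> is_succ lt m2 n -> m1 = m2.
Proof.
move=> h1 h2.
case: (succ_below h1 (succ_lt h2)) => // l21.
case: (succ_below h2 (succ_lt h1)) => // l12.
by exfalso; apply: (@lt_irr m1); apply: Htr l12 l21.
Qed.
Lemma zero_le {z} n : is_zero lt z -> ole lt z n.
Proof. by move=> hz; case: (Htot z n) => [h|->|h]; [right|left|case: (hz n)]. Qed.
Lemma classify n : [\/ is_zero lt n, exists m, is_succ lt m n | is_limit lt n].
Proof.
case: (pselect (is_zero lt n)) => hz; first by apply: Or31.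
case: (pselect (exists m, is_succ lt m n)) => hs; first by apply: Or32.
by apply: Or33.
Qed.

Record cdat (m s : O) := CD {
  cn : nat; ca : X m; cb : X m; cg : 'rV[R]_cn * R -> X m;
  ca' : X s; cb' : X s; cg' : 'rV[R]_cn * R -> X s }.
Arguments CD {m s}.
Arguments cn {m s}. Arguments ca {m s}. Arguments cb {m s}. Arguments cg {m s}.
Arguments ca' {m s}. Arguments cb' {m s}. Arguments cg' {m s}.

Definition cdok {m s} (d : cdat m s) :=
  cpb (F m s) (ca d) (cb d) (cg d) (ca' d) (cb' d) (cg' d).

Lemma ex_cd {m s} : is_succ lt m s -> exists d : cdat m s, cdok d.
Proof.
move=> /Hsucc /cell_pushoutE [k [a [b [g [a' [b' [g' h]]]]]]].
by exists (CD k a b g a' b' g').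
Qed.

Definition dat m s : option (cdat m s) :=
  match pselect (exists d : cdat m s, cdok d) with
  | left H => Some (proj1_sig (cid H))
  | right _ => None
  end.

Lemma dat_ok {m s d} : dat m s = Some d -> cdok d.
Proof.
rewrite /dat; case: pselect => // H [<-].
exact: (proj2_sig (cid H)).
Qed.

Lemma datP {m s} : is_succ lt m s -> exists d, dat m s = Some d.
Proof.
move=> /ex_cd H; rewrite /dat; case: pselect => // H'.
by eexists.
Qed.

Theorem Finj n : forall m, ole lt m n -> injective (F m n).
Proof.
elim/(well_founded_induction Hwf): n => n IH m [<-|hmn].
  by move=> x y; rewrite !Hid.
case: (classify n) => [hz|[p hp]|hl].
- by case: (hz m).
- have hmp := succ_below hp hmn.
  have [d hd] := datP hp.
  move=> x1 x2 e.
  rewrite -(Hcomp _ _ _ hmp (lt_ole (succ_lt hp))) -[F m n x2](Hcomp _ _ _ hmp (lt_ole (succ_lt hp))) in e.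
  have := push_inj (dat_ok hd) e.
  exact: (IH p (succ_lt hp) m hmp).
- move=> x1 x2 e.
  pose Pq r (y : X r) := exists q, [/\ lt q n, ole lt r q, ole lt m q & F r q y = F m q x1].
  pose h r (y : X r) : Ind R := if pselect (Pq r y) then 1 : R else 0 : R.
  have hc : forall q r, ole lt q r -> lt r n -> forall y, h r (F q r y) = h q y.
    move=> q r hqr hrn y.
    have E : Pq r (F q r y) <-> Pq q y.
      split.
      + move=> [q' [h1 h2 h3 h4]]; exists q'; split => //; first exact: ole_trans hqr h2.
        by rewrite -h4 Hcomp.
      + move=> [q' [h1 h2 h3 h4]].
        case: (Htot q' r) => [l|<-|l].
        * exists r; split; [exact: hrn | exact: ole_refl | exact: ole_trans h3 (lt_ole l) |].
          by rewrite Hid -(Hcomp _ _ _ h2 (lt_ole l)) h4 Hcomp //; exact: lt_ole.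
        * by exists q'; split; [exact: h1 | exact: ole_refl | exact: h3 | rewrite Hid].
        * exists q'; split; [exact: h1 | exact: lt_ole l | exact: h3 |].
          by rewrite Hcomp //; exact: lt_ole.
    rewrite /h; case: pselect => [A|nA]; case: pselect => [B|nB] //.
    - by exfalso; apply: nB; apply/E.
    - by exfalso; apply: nA; apply/E.
  have [u [[_ hu] _]] := Hlim n hl (Ind R) h (fun r _ => ind_hom (h r)) hc.
  have := hu m hmn x2; rewrite -e hu // /h.
  case: pselect => [_|nA] /=; last first.
    by exfalso; apply: nA; exists m; split => //; exact: ole_refl.
  case: pselect => [hB|nB] /=; last first.
    move=> h10; exfalso; have : (1 : R) = 0 := h10.
    by move/eqP; rewrite oner_eq0.
  move=> _; case: hB => q [hq _ hmq e2].
  apply: (IH q hq m hmq); by rewrite e2.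
Qed.

Definition Bs n : set (X n) := fun y => exists z x, is_zero lt z /\ y = F z n x.
Definition LEs (late : bool) n : set (X n) := fun y =>
  exists m s (d : cdat m s) z t, [/\ is_succ lt m s, ole lt s n, dat m s = Some d,
     interior_pt z t & (if late then 1/2 < t else t < 1/2) /\ y = F s n (cg' d (z, t))].
Definition Ls := LEs true.
Definition Es := LEs false.

Lemma transB1 m n y : ole lt m n -> Bs m y -> Bs n (F m n y).
Proof.
move=> hmn [z [x [hz ->]]]; exists z, x; split => //.
by rewrite Hcomp //; exact: zero_le.
Qed.

Lemma transB2 m n y : ole lt m n -> Bs n (F m n y) -> Bs m y.
Proof.
move=> hmn [z [x [hz e]]]; exists z, x; split => //.
apply: (Finj _ _ hmn); rewrite e Hcomp //; exact: zero_le.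
Qed.

Lemma transLE b m n y : ole lt m n -> LEs b m y -> LEs b n (F m n y).
Proof.
move=> hmn [p [s [d [z [t [h1 h2 h3 h4 [h5 ->]]]]]]].
exists p, s, d, z, t; split => //; first exact: ole_trans h2 hmn.
by split => //; rewrite Hcomp.
Qed.

Lemma transQ m n (p : I -> X m) : ole lt m n -> Qp (Bs m) (Ls m) (Es m) p ->
  Qp (Bs n) (Ls n) (Es n) (F m n \o p).
Proof.
move=> hmn; apply: Qp_transport.
- exact: (Finj _ _ hmn).
- by move=> y; apply: transB1.
- by move=> y; apply: transB2.
- by move=> y; apply: transLE.
- by move=> y; apply: transLE.
Qed.

Lemma cross {s1 s2 n m2} {d2 : cdat m2 s2} {w : X s1} {z2 t2} :
  lt s1 s2 -> ole lt s2 n -> is_succ lt m2 s2 -> dat m2 s2 = Some d2 ->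
  interior_pt z2 t2 -> F s1 n w = F s2 n (cg' d2 (z2, t2)) -> False.
Proof.
move=> l12 h2n hs hd hi e.
have h1m := succ_below hs l12.
have hm2 := lt_ole (succ_lt hs).
rewrite -(Hcomp _ _ _ (ole_trans h1m hm2) h2n) -(Hcomp _ _ _ h1m hm2) in e.
have := Finj _ _ h2n _ _ e.
by move/esym; apply: (push_P2 (dat_ok hd) hi).
Qed.

Lemma disLE n y : Ls n y -> Es n y -> False.
Proof.
move=> [m1 [s1 [d1 [z1 [t1 [hs1 h1n hd1 hi1 [ht1 e1]]]]]]].
move=> [m2 [s2 [d2 [z2 [t2 [hs2 h2n hd2 hi2 [ht2 e2]]]]]]].
rewrite e1 in e2.
case: (Htot s1 s2) => [l|es|l].
- exact: (cross l h2n hs2 hd2 hi2 e2).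
- subst s2; have em := succ_uniq hs1 hs2; subst m2.
  rewrite hd1 in hd2; case: hd2 => ed; subst d2.
  have := Finj _ _ h1n _ _ e2 => /(push_P3 (dat_ok hd1) hi1 hi2) et.
  by subst t2; move: (lt_trans ht2 ht1); rewrite ltxx.
- exact: (cross l h1n hs1 hd1 hi1 (esym e2)).
Qed.

Definition restr (Y : mds R) (S : set Y) (Q : set (I -> Y))
  (hR : forall p phi, Q p -> G11 phi -> Q (p \o phi))
  (hC : forall p q, Q p -> Q q -> p (i1 R) = q (i0 R) -> Q (concatN p q))
  (hE : forall p, Q p -> S (p (i0 R)) /\ S (p (i1 R))) : mds R.
refine (@MDS R (mcar Y) (@mcar_DG R Y) (mst Y `&` S) (mP Y `&` Q) _ _ _ _).
- by move=> g [hg _]; exact: mP_cont hg.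
- move=> g [hg hq]; have [e0 e1] := mP_ends hg; have [s0 s1] := hE _ hq.
  by split; split.
- by move=> g phi [hg hq] hphi; split; [exact: mP_reparam | exact: hR].
- by move=> g h [hg hq] [hh hqh] e; split; [exact: mP_concat | exact: hC].
Defined.

Definition Yr n : mds R :=
  @restr (X n) (Bs n) (@Qp R _ (Bs n) (Ls n) (Es n))
    (fun p phi hp hphi => Qp_reparam hp hphi)
    (fun p q hp hq e => Qp_concat (@disLE n) hp hq e)
    (fun p hp => let: And4 h _ _ _ := hp in h).

Lemma hom_Yr_X n (Z : mds R) (u : Z -> Yr n) : is_hom u -> is_hom (u : Z -> X n).
Proof. by case=> hc hs hp; split => // [x /hs []|g /hp []]. Qed.

Lemma hom_X_Yr n (Z : mds R) (u : Z -> X n) :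
  is_hom u -> (forall x, mst Z x -> Bs n (u x)) ->
  (forall p, mP Z p -> Qp (Bs n) (Ls n) (Es n) (u \o p)) -> is_hom (u : Z -> Yr n).
Proof. by case=> hc hs hp hB hQ; split => // [x hx|g hg]; split; auto. Qed.

Lemma hom_id (Z : mds R) : is_hom (fun x : Z => x).
Proof. by split => // x; exact: cvg_id. Qed.

Lemma cellpath m n (d : cdat m n) z phi :
  is_succ lt m n -> dat m n = Some d ->
  Bs n (ca' d) -> Bs n (cb' d) ->
  @Disk R (cn d) z -> ~ @Sphere R (cn d) z -> G11 phi ->
  Qp (Bs n) (Ls n) (Es n) (fun t => cg' d (z, v (phi t))).
Proof.
move=> hs hd hBa hBb hD hS hphi.
have ok := dat_ok hd.
have [_ hg' [ea eb] hc _] := ok.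
have [_ _ _ hends _] := hg'.
have [g0 g1] := hends z hD.
have hmn := lt_ole (succ_lt hs).
pose p t := cg' d (z, v (phi t)).
have p0 : forall t : I, v t = 0 -> p t = ca' d.
  move=> t t0; have -> : t = i0 R by apply: vinj; rewrite t0 v_i0.
  by rewrite /p G11_0.
have p1 : forall t : I, v t = 1 -> p t = cb' d.
  move=> t t1; have -> : t = i1 R by apply: vinj; rewrite t1 v_i1.
  by rewrite /p G11_1.
have pint : forall t : I, 0 < v t < 1 -> interior_pt z (v (phi t)).
  move=> t /andP[t0 t1]; split => //; split => //.
  apply/andP; split.
  + by rewrite -(G11_0 hphi); apply: G11_mono => //; rewrite v_i0.
  + by rewrite -(G11_1 hphi); apply: G11_mono => //; rewrite v_i1.
have notB : forall t : I, 0 < v t < 1 -> Bs n (p t) -> False.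
  move=> t ht [z0 [x [hz e]]].
  rewrite -(Hcomp _ _ _ (zero_le m hz) hmn) in e.
  exact: (push_P2 ok (pint t ht) e).
have endne : forall t s : I, 0 < v t < 1 -> (v s = 0 \/ v s = 1) -> p t = p s -> False.
  move=> t s ht [s0|s1].
  - by rewrite (p0 _ s0) ea; apply: (push_P2 ok (pint t ht)).
  - by rewrite (p1 _ s1) eb; apply: (push_P2 ok (pint t ht)).
have C : forall x y : I, p x = p y -> v x = v y \/ (v x = 0 /\ v y = 1) \/ (v x = 1 /\ v y = 0).
  move=> x y e.
  have v3 : forall w : I, v w = 0 \/ 0 < v w < 1 \/ v w = 1.
    move=> w; have := vP w => /andP[w0 w1].
    case: (ltgtP 0 (v w)) => h0; last by left.
      case: (ltgtP (v w) 1) => h1; last by right; right.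
        by right; left; apply/andP.
      by exfalso; move: (lt_le_trans h1 w1); rewrite ltxx.
    by exfalso; move: (lt_le_trans h0 w0); rewrite ltxx.
  case: (v3 x) => [hx|[hx|hx]]; case: (v3 y) => [hy|[hy|hy]].
  - by left; rewrite hx hy.
  - by exfalso; apply: (endne y x hy); [left | ].
  - by right; left.
  - by exfalso; apply: (endne x y hx); [left | ].
  - have := push_P3 ok (pint x hx) (pint y hy) e.
    by move/vinj/(G11_inj hphi) ->; left.
  - by exfalso; apply: (endne x y hx); [right | ].
  - by right; right.
  - by exfalso; apply: (endne y x hy); [right | ].
  - by left; rewrite hx hy.
split.
- split.
  + by move: (p0 (i0 R) (v_i0 R)); rewrite /p /= => ->.
  + by move: (p1 (i1 R) (v_i1 R)); rewrite /p /= => ->.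
- move=> t; exists (1/2); first clra R.
  move=> x y; rewrite !normlt => /andP[x1 x2] /andP[y1 y2] /C.
  case=> [/vinj //|[[hx hy]|[hx hy]]]; exfalso; clra R.
- move=> t t0 hB.
  have t1 : v t = 1.
    have := vP t => /andP[_ t1]; case: (ltgtP (v t) 1) => // h1.
    - by exfalso; apply: (notB t); [apply/andP; split | ].
    - by exfalso; move: (lt_le_trans h1 t1); rewrite ltxx.
  have [d0 d00 hd0] := @cont_eps R phi t (G11_cont hphi) (1/2) (ltac:(clra R) : (0:R) < 1/2).
  exists (Num.min d0 1); first by rewrite lt_min d00 ltr01.
  have := minl d0 1; have := minr d0 1 => m1 m2.
  move=> s s1 s2.
  have hs' : 0 < v s < 1 by apply/andP; split; clra R.
  exists m, n, d, z, (v (phi s)); split => //; first exact: ole_refl.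
  + exact: pint.
  + split; last by rewrite Hid.
    have : `|v (phi s) - v (phi t)| < 1/2 by apply: hd0; rewrite normlt; apply/andP; split; clra R.
    have -> : t = i1 R by apply: vinj; rewrite t1 v_i1.
    by rewrite G11_1 // normlt => /andP[? ?]; clra R.
- move=> t t1 hB.
  have t0 : v t = 0.
    have := vP t => /andP[t0 _]; case: (ltgtP 0 (v t)) => // h1.
    - by exfalso; apply: (notB t); [apply/andP; split | ].
    - by exfalso; move: (lt_le_trans h1 t0); rewrite ltxx.
  have [d0 d00 hd0] := @cont_eps R phi t (G11_cont hphi) (1/2) (ltac:(clra R) : (0:R) < 1/2).
  exists (Num.min d0 1); first by rewrite lt_min d00 ltr01.
  have := minl d0 1; have := minr d0 1 => m1 m2.
  move=> s s1 s2.
  have hs' : 0 < v s < 1 by apply/andP; split; clra R.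
  exists m, n, d, z, (v (phi s)); split => //; first exact: ole_refl.
  + exact: pint.
  + split; last by rewrite Hid.
    have : `|v (phi s) - v (phi t)| < 1/2 by apply: hd0; rewrite normlt; apply/andP; split; clra R.
    have -> : t = i0 R by apply: vinj; rewrite t0 v_i0.
    by rewrite G11_0 // normlt => /andP[? ?]; clra R.
Qed.


Theorem inv n : (forall y, mst (X n) y -> Bs n y) /\
  (forall p, mP (X n) p -> Qp (Bs n) (Ls n) (Es n) p).
Proof.
elim/(well_founded_induction Hwf): n => n IH.
case: (classify n) => [hz|[m hs]|hl].
- have [_ hst hP] := Hzero n hz; split.
  + by move=> y _; exists n, y; split => //; rewrite Hid.
  + by move=> p; rewrite hP.
- have hmn := lt_ole (succ_lt hs).
  have [IHs IHp] := IH m (succ_lt hs).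
  have [d hd] := datP hs.
  have ok := dat_ok hd.
  have [hg hg' [ea eb] hc UP] := ok.
  have hBa : Bs n (ca' d).
    by rewrite ea; apply: transB1 => //; apply: IHs; case: hg.
  have hBb : Bs n (cb' d).
    by rewrite eb; apply: transB1 => //; apply: IHs; case: hg.
  have hF : is_hom (F m n : X m -> Yr n).
    apply: hom_X_Yr; first exact: Hhom.
    - by move=> x /IHs; apply: transB1.
    - by move=> p /IHp; apply: transQ.
  have hk : glob_map (@Disk R (cn d)) (ca' d : Yr n) (cb' d) (cg' d).
    case: hg' => s1 s2 s3 s4 s5; split => //.
    move=> z phi hD hphi; split; first exact: s5.
    case: (pselect (@Sphere R (cn d) z)) => hS; last exact: cellpath.
    have -> : (fun t => cg' d (z, v (phi t))) = F m n \o (fun t => cg d (z, v (phi t))).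
      by apply: funext => t /=; rewrite hc //; exact: set_valP.
    apply: transQ => //; apply: IHp.
    by case: hg => _ _ _ _ h5; apply: h5.
  have [u [[hu hu1 hu2 hu3 hu4] _]] := UP (Yr n) (F m n) _ _ (cg' d) hF hk ea eb hc.
  have [u0 [_ uniq]] := UP (X n) (F m n) _ _ (cg' d) (Hhom _ _ hmn) hg' ea eb hc.
  have e1 : (fun x => x) = u0.
    by apply: uniq; split => //; exact: hom_id.
  have e2 : (u : X n -> X n) = u0.
    by apply: uniq; split => //; exact: hom_Yr_X.
  have eu : forall x, u x = x by move=> x; rewrite e2 -e1.
  case: hu => _ hus hup; split.
  + by move=> y /hus []; rewrite eu.
  + move=> p /hup [] _.
    by have -> : u \o p = p by apply: funext => t /=; rewrite eu.
- have hF : forall r, lt r n -> is_hom (F r n : X r -> Yr n).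
    move=> r hr; have [IHs IHp] := IH r hr.
    apply: hom_X_Yr; first exact: Hhom (lt_ole hr).
    - by move=> x /IHs; apply: transB1; exact: lt_ole.
    - by move=> p /IHp; apply: transQ; exact: lt_ole.
  have hc : forall q r, ole lt q r -> lt r n -> forall x, F r n (F q r x) = F q n x.
    by move=> q r hqr hr x; rewrite Hcomp //; exact: lt_ole.
  have [u [[hu hu1] _]] := Hlim n hl (Yr n) (fun r => F r n) hF hc.
  have [u0 [_ uniq]] := Hlim n hl (X n) (fun r => F r n) (fun r hr => Hhom _ _ (lt_ole hr)) hc.
  have e1 : (fun x => x) = u0.
    by apply: uniq; split => //; exact: hom_id.
  have e2 : (u : X n -> X n) = u0.
    by apply: uniq; split => //; exact: hom_Yr_X.
  have eu : forall x, u x = x by move=> x; rewrite e2 -e1.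
  case: hu => _ hus hup; split.
  + by move=> y /hus []; rewrite eu.
  + move=> p /hup [] _.
    by have -> : u \o p = p by apply: funext => t /=; rewrite eu.
Qed.


End Main.


Theorem proposition5p13 (R : realType) (O : Type) (lt : O -> O -> Prop)
    (lam : O) (X : O -> mds R) (F : forall m n, X m -> X n) :
  cellular lt lam X F ->
  forall g, mP (X lam) g -> locally_injective g.
Proof.
case=> [[[Hwf Htr Htot] _] [Hid Hcomp Hhom] Hzero Hsucc Hlim] g hg.
have [_ hQ] := inv _ _ _ _ _ Hwf Htr Htot Hid Hcomp Hhom Hzero Hsucc Hlim lam.
have [_ li _ _] := hQ g hg.
exact: locinjB_li.
Qed.
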